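(* Let $\delta\in(0,1/2)$, $\varepsilon\in(0,1/2]$. If $C:\{0,1\}^k\to\Sigma^m$ is a $(q,\delta,\varepsilon)$ insdel LCC, then there exists a $(q,\delta,\varepsilon)$ insdel LDC $C':\{0,1\}^{k'}\to\Sigma^m$ with $k'=\Omega(k/\log(1/\delta))$.
   Context: $\mathrm{ED}(u,v)$ is the minimum number of single-symbol insertions and deletions transforming $u$ into $v$. A map $C:\{0,1\}^n\to\Sigma^m$ is a $(q,\delta,\varepsilon)$ insdel LDC if there is a randomized algorithm $\mathrm{Dec}$ which, given oracle access to $y\in\Sigma^{m'}$, the length $m'$, and $i\in[n]$, reads at most $q$ symbols of $y$ and satisfies $\Pr[\mathrm{Dec}(y,m',i)=x_i]\ge1/2+\varepsilon$ for every $x\in\{0,1\}^n$, $i\in[n]$, and every $y$ with $\mathrm{ED}(C(x),y)\le2\delta m$. It is a $(q,\delta,\varepsilon)$ insdel LCC (locally correctable insdel code) if the same holds with $i$ ranging over $[m]$ and the requirement $\Pr[\mathrm{Dec}(y,m',i)=C(x)_i]\ge1/2+\varepsilon$. *)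

(* Defs.v *)
From mathcomp Require Import all_boot.
From Stdlib Require Import Reals.
Set Implicit Arguments. Unset Strict Implicit. Unset Printing Implicit Defensive.

Section Edit.
Variable S : Type.

Definition insdel_step (u w : seq S) : Prop :=
  exists (a b : seq S) (x : S),
    (u = a ++ b /\ w = a ++ x :: b) \/ (u = a ++ x :: b /\ w = a ++ b).

Inductive ed_within : nat -> seq S -> seq S -> Prop :=
| edw_refl n u : ed_within n u u
| edw_step n u w v : insdel_step u w -> ed_within n w v -> ed_within n.+1 u v.

Definition ED_le (u v : seq S) (d : R) : Prop :=
  exists n : nat, (INR n <= d)%R /\ ed_within n u v.
End Edit.

(* A deterministic adaptive query procedure with outputs in O: at a node it
   reads position j of the oracle y (None if j is out of range) and continues. *)
Inductive qtree (S O : Type) : Type :=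
| Leaf of O
| Query of nat & (option S -> qtree S O).

Fixpoint run (S O : Type) (t : qtree S O) (y : seq S) : O * nat :=
  match t with
  | Leaf o => (o, 0%N)
  | Query j k => let r := run (k (onth y j)) y in (r.1, r.2.+1)
  end.

(* A randomized decoder's behaviour on a fixed input (m', i): a finitely
   supported probability distribution over deterministic query procedures. *)
Definition sumR (s : seq R) : R := foldr Rplus 0%R s.

Definition is_dist (S O : Type) (d : seq (R * qtree S O)) : Prop :=
  (forall p, List.In p d -> (0 <= p.1)%R) /\ sumR (map fst d) = 1%R.

Definition reads_at_most (S O : Type) (q : nat) (d : seq (R * qtree S O)) : Prop :=
  forall p, List.In p d -> forall y : seq S, ((run p.2 y).2 <= q)%N.

Definition prob_out (S : Type) (O : eqType) (d : seq (R * qtree S O))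
  (y : seq S) (o : O) : R :=
  sumR [seq p.1 | p <- d & (run p.2 y).1 == o].

Definition insdel_LDC (Sg : finType) (n m : nat)
  (C : n.-tuple bool -> m.-tuple Sg) (q : nat) (delta eps : R) : Prop :=
  exists Dec : nat -> 'I_n -> seq (R * qtree Sg bool),
    (forall m' i, is_dist (Dec m' i) /\ reads_at_most q (Dec m' i)) /\
    (forall (x : n.-tuple bool) (i : 'I_n) (y : seq Sg),
        ED_le (val (C x)) y (2 * delta * INR m)%R ->
        (/2 + eps <= prob_out (Dec (size y) i) y (tnth x i))%R).

Definition insdel_LCC (Sg : finType) (n m : nat)
  (C : n.-tuple bool -> m.-tuple Sg) (q : nat) (delta eps : R) : Prop :=
  exists Dec : nat -> 'I_m -> seq (R * qtree Sg Sg),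
    (forall m' i, is_dist (Dec m' i) /\ reads_at_most q (Dec m' i)) /\
    (forall (x : n.-tuple bool) (i : 'I_m) (y : seq Sg),
        ED_le (val (C x)) y (2 * delta * INR m)%R ->
        (/2 + eps <= prob_out (Dec (size y) i) y (tnth (C x) i))%R).

(* Main.v *)
Require Import Defs.
From mathcomp Require Import all_boot.
From Stdlib Require Import Reals.
From Stdlib Require Import Lra ZArith.
Import ssrnat.
Set Implicit Arguments. Unset Strict Implicit. Unset Printing Implicit Defensive.

Section ED.
Variable S : Type.

Lemma edw_mono n j (u v : seq S) : ed_within n u v -> ed_within (n + j) u v.
Proof.
elim=> [n' u'|n' u' w v' st _ IH]; first exact: edw_refl.
by rewrite addSn; apply: edw_step st IH.
Qed.

Lemma edw_trans a b (u w v : seq S) :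
  ed_within a u w -> ed_within b w v -> ed_within (a + b) u v.
Proof.
elim=> [n u'|n u' w' v' st _ IH] H.
  by rewrite addnC; apply: edw_mono.
by rewrite addSn; apply: edw_step st (IH H).
Qed.

Lemma step_cons x (u w : seq S) : insdel_step u w -> insdel_step (x :: u) (x :: w).
Proof.
case=> a [b [y [[-> ->]|[-> ->]]]].
  by exists (x :: a), b, y; left.
by exists (x :: a), b, y; right.
Qed.

Lemma edw_cons x n (u v : seq S) : ed_within n u v -> ed_within n (x :: u) (x :: v).
Proof.
elim=> [n' u'|n' u' w v' st _ IH]; first exact: edw_refl.
by apply: edw_step (step_cons x st) IH.
Qed.

Lemma edw_subst x y (u : seq S) : ed_within 2 (x :: u) (y :: u).
Proof.
apply: (@edw_step S 1 _ u).
  by exists [::], u, x; right.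
apply: (@edw_step S 0 _ (y :: u)); last exact: edw_refl.
by exists [::], u, y; left.
Qed.
End ED.

Section Ham.
Variable S : eqType.
Fixpoint hs (u v : seq S) : nat :=
  match u, v with
  | x :: u', y :: v' => (x != y) + hs u' v'
  | _, _ => 0
  end.

Lemma hs_ed (u v : seq S) : size u = size v -> ed_within (2 * hs u v) u v.
Proof.
elim: u v => [|x u IH] [|y v] //=.
- move=> _; exact: edw_refl.
- move=> [] /IH H.
  case: eqP => [->|_] /=; first by rewrite add0n; apply: edw_cons.
  rewrite mulnDr muln1.
  apply: edw_trans (edw_subst _ _ _) _.
  exact: edw_cons.
Qed.

Lemma ham_hs m (a b : m.-tuple S) :
  \sum_(i < m) (tnth a i != tnth b i) = hs a b.
Proof.
elim: m a b => [|m IH] a b.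
  by rewrite big_ord0 (tuple0 a) (tuple0 b).
case: a / tupleP => x a; case: b / tupleP => y b.
rewrite big_ord_recl /= !tnth0 -IH.
congr (_ + _); apply: eq_bigr => i _; by rewrite !tnthS.
Qed.
End Ham.

Fixpoint qmap (S O O' : Type) (f : O -> O') (t : qtree S O) : qtree S O' :=
  match t with
  | Leaf o => Leaf S (f o)
  | Query j k => Query j (fun s => qmap f (k s))
  end.

Lemma run_qmap (S O O' : Type) (f : O -> O') (t : qtree S O) y :
  run (qmap f t) y = (f (run t y).1, (run t y).2).
Proof. by elim: t => [o|j k IH] //=; rewrite IH. Qed.

Definition dmap (S O O' : Type) (f : O -> O') (d : seq (R * qtree S O)) :=
  map (fun p => (p.1, qmap f p.2)) d.

Lemma dmap_dist (S O O' : Type) (f : O -> O') d : is_dist d -> @is_dist S O' (dmap f d).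
Proof.
case=> H1 H2; split.
  move=> p /List.in_map_iff [p' [<- Hp']] /=; exact: H1.
by rewrite -H2 /dmap -map_comp.
Qed.

Lemma dmap_reads (S O O' : Type) (f : O -> O') q d :
  reads_at_most q d -> @reads_at_most S O' q (dmap f d).
Proof.
move=> H p /List.in_map_iff [p' [<- Hp']] y /=; rewrite run_qmap /=; exact: H.
Qed.

Lemma prob_map_ge (S : Type) (O O' : eqType) (f : O -> O') (d : seq (R * qtree S O)) y c :
  (forall p, List.In p d -> (0 <= p.1)%R) ->
  (prob_out d y c <= prob_out (dmap f d) y (f c))%R.
Proof.
rewrite /prob_out; elim: d => [|p d IH] H /=; first lra.
have Hd : forall p, List.In p d -> (0 <= p.1)%R by move=> p' Hp'; apply: H; right.
have Hp : (0 <= p.1)%R by apply: H; left.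
rewrite run_qmap /=.
case: eqP => [->|_]; rewrite ?eqxx /=.
  by have := IH Hd; lra.
case: eqP => _ /=; have := IH Hd; lra.
Qed.

Lemma prob_sum2 (S : Type) (O : eqType) (d : seq (R * qtree S O)) y o1 o2 :
  (forall p, List.In p d -> (0 <= p.1)%R) -> o1 != o2 ->
  (prob_out d y o1 + prob_out d y o2 <= sumR (map fst d))%R.
Proof.
rewrite /prob_out => + ne; elim: d => [|p d IH] H /=; first lra.
have Hd : forall p, List.In p d -> (0 <= p.1)%R by move=> p' Hp'; apply: H; right.
have Hp : (0 <= p.1)%R by apply: H; left.
have := IH Hd.
case: eqP => [e1|_]; case: eqP => [e2|_] /=; try lra.
by move: ne; rewrite -e1 -e2 eqxx.
Qed.

Section Pajor.
Variable X : finType.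

Definition shatters (B : {set {ffun X -> bool}}) (S : {set X}) : bool :=
  [forall h : {ffun X -> bool}, [exists b in B, [forall x in S, b x == h x]]].

Lemma shatters_sub (B B' : {set {ffun X -> bool}}) S :
  B \subset B' -> shatters B S -> shatters B' S.
Proof.
move=> sub /forallP H; apply/forallP => h.
have /existsP [b /andP [bB Hb]] := H h.
by apply/existsP; exists b; rewrite (subsetP sub).
Qed.

Lemma shatters_notin (B : {set {ffun X -> bool}}) S x e :
  (forall b, b \in B -> b x = e) -> shatters B S -> x \notin S.
Proof.
move=> He /forallP /(_ [ffun=> ~~ e]) /existsP [b /andP [bB /forallP Hb]].
apply/negP => xS; have := Hb x; rewrite xS ffunE (He _ bB) /=.
by case: (e).
Qed.

Lemma pajor (B : {set {ffun X -> bool}}) :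
  #|B| <= #|[set S | shatters B S]|.
Proof.
move: {2}#|B| (leqnn #|B|) => n; elim: n B => [|n IH] B.
  by rewrite leqn0 => /eqP ->.
move=> HB.
case: (leqP #|B| 1) => [B1|B2].
  case: (set_0Vmem B) => [->|[b bB]]; first by rewrite cards0.
  apply: (leq_trans B1); rewrite card_gt0; apply/set0Pn; exists set0.
  rewrite inE; apply/forallP => h; apply/existsP; exists b; rewrite bB /=.
  by apply/forallP => x; rewrite inE.
have [b1 [b2 [b1B b2B ne]]] : exists b1 b2, [/\ b1 \in B, b2 \in B & b1 != b2].
  by apply/card_gt1P.
have [x xne] : exists x, b1 x != b2 x.
  apply/existsP; move: ne; apply: contraR; rewrite negb_exists => /forallP H.
  by apply/eqP/ffunP => x; apply/eqP; have := H x; rewrite negbK.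
pose B0 := [set b : {ffun X -> bool} in B | ~~ b x]; pose B1 := [set b : {ffun X -> bool} in B | b x].
have cB : #|B0| + #|B1| = #|B|.
  rewrite addnC /B0 /B1 -(cardsID [set b : {ffun X -> bool} | b x] B); congr (_ + _); apply: eq_card => b;
  by rewrite !inE // andbC.
have B0lt : #|B0| < #|B|.
  rewrite -cB -{1}(addn0 #|B0|) ltn_add2l card_gt0; apply/set0Pn.
  case Hb1: (b1 x); [exists b1 | exists b2]; rewrite inE ?b1B ?b2B //=.
  by move: xne; rewrite Hb1; case: (b2 x).
have B1lt : #|B1| < #|B|.
  rewrite -cB -{1}(add0n #|B1|) ltn_add2r card_gt0; apply/set0Pn.
  case Hb1: (b1 x); [exists b2 | exists b1]; rewrite inE ?b1B ?b2B ?Hb1 //=.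
  by move: xne; rewrite Hb1; case: (b2 x).
have IH0' : #|B0| <= #|[set S | shatters B0 S]| by apply: IH; rewrite -ltnS (leq_trans B0lt HB).
have IH1' : #|B1| <= #|[set S | shatters B1 S]| by apply: IH; rewrite -ltnS (leq_trans B1lt HB).
pose sh0 := [set S | shatters B0 S]; pose sh1 := [set S | shatters B1 S].
have nx0 : forall S, S \in sh0 -> x \notin S.
  move=> S; rewrite inE; apply: (@shatters_notin _ _ _ false) => b; rewrite inE.
  by case/andP => _; case: (b x).
have nx1 : forall S, S \in sh1 -> x \notin S.
  move=> S; rewrite inE; apply: (@shatters_notin _ _ _ true) => b; rewrite inE.
  by case/andP => _ ->.
pose up := [set x |: S | S in sh0 :&: sh1].
have cup : #|up| = #|sh0 :&: sh1|.
  apply: card_in_imset => S T; rewrite in_setI => /andP [S0 _]; rewrite in_setI => /andP [T0 _] E.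
  by rewrite -(setU1K (nx0 _ S0)) -(setU1K (nx0 _ T0)) E.
have dis : [disjoint (sh0 :|: sh1) & up].
  rewrite -setI_eq0; apply/eqP/setP => S; rewrite in_set0 in_setI.
  apply/negP => /andP [H /imsetP [T _ E]]; subst S.
  case/setUP: H => H; [move: (nx0 _ H) | move: (nx1 _ H)]; by rewrite setU11.
have sub : (sh0 :|: sh1) :|: up \subset [set S | shatters B S].
  apply/subsetP => S /setUP [/setUP [H|H]|H]; rewrite inE.
  - rewrite inE in H; apply: shatters_sub H; apply/subsetP => b; rewrite inE => /andP [] //.
  - rewrite inE in H; apply: shatters_sub H; apply/subsetP => b; rewrite inE => /andP [] //.
  - case/imsetP: H => T; rewrite !inE => /andP [T0 T1] ->.
    apply/forallP => h.
    case hx: (h x).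
    + have /existsP [b /andP [bB /forallP Hb]] := forallP T1 h.
      apply/existsP; exists b; move: bB; rewrite inE => /andP [-> bx] /=.
      apply/forallP => z; apply/implyP; rewrite in_setU1 => /orP [/eqP ->|zT].
        by rewrite bx hx.
      by have := Hb z; rewrite zT.
    + have /existsP [b /andP [bB /forallP Hb]] := forallP T0 h.
      apply/existsP; exists b; move: bB; rewrite inE => /andP [-> bx] /=.
      apply/forallP => z; apply/implyP; rewrite in_setU1 => /orP [/eqP ->|zT].
        by rewrite hx; move: bx; case: (b x).
      by have := Hb z; rewrite zT.
apply: leq_trans (subset_leq_card sub).
rewrite cardsU.
have -> : #|(sh0 :|: sh1) :&: up| = 0.
  by apply/eqP; rewrite cards_eq0 setI_eq0.
rewrite subn0 cup -cB.
apply: (leq_trans (leq_add IH0' IH1')).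
by rewrite -cardsUI leqnn.
Qed.
End Pajor.

Lemma sum_indicator (I : finType) (P : pred I) :
  \sum_(i : I) (P i : nat) = #|[set i | P i]|.
Proof.
rewrite -sum1dep_card [RHS]big_mkcond /=; apply: eq_bigr => i _; by case: (P i).
Qed.

Lemma card_small (X : finType) (P : {set {set X}}) d :
  (forall S, S \in P -> #|S| <= d) -> #|P| <= \sum_(j < d.+1) 'C(#|X|, j).
Proof.
move=> H.
have E : forall j : 'I_d.+1, 'C(#|X|, j) = \sum_(S : {set X}) (#|S| == j : nat).
  by move=> j; rewrite sum_indicator card_draws.
rewrite (@eq_bigr _ _ _ _ _ _ _ (fun j : 'I_d.+1 => \sum_(S : {set X}) (#|S| == j : nat))); last by move=> j _; exact: E.
rewrite exchange_big /=.
rewrite -sum1_card big_mkcond /=.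
apply: leq_sum => S _; case: ifP => // SP.
have Sd : #|S| < d.+1 by rewrite ltnS H.
rewrite (bigD1 (Ordinal Sd)) //= eqxx; exact: leq_addr.
Qed.

Lemma binom_bound M d : d <= M ->
  (\sum_(j < d.+1) 'C(M, j)) * (d ^ d * M ^ (M - d)) <= (M + d) ^ M.
Proof.
move=> dM; rewrite expnDn big_distrl /=.
rewrite (bigID (fun i : 'I_M.+1 => i < d.+1)) /=.
apply: leq_trans (leq_addr _ _).
have dM1 : d.+1 <= M.+1 by [].
rewrite (big_ord_widen _ (fun i => 'C(M, i) * (d ^ d * M ^ (M - d))) dM1).
apply: leq_sum => i /= id; rewrite leq_mul2l; apply/orP; right.
have iM : i <= M by apply: leq_trans dM; rewrite -ltnS.
have -> : M - i = (M - d) + (d - i) by rewrite addnBA ?subnK // -ltnS.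
rewrite expnD mulnC -mulnA leq_mul2l; apply/orP; right.
have -> : d ^ d = d ^ (d - i) * d ^ i by rewrite -expnD subnK // -ltnS.
rewrite leq_mul2r; apply/orP; right.
by case: (d - i) => [|e]; rewrite ?expn0 // leq_exp2r.
Qed.

Lemma INR_addn a b : INR (a + b) = (INR a + INR b)%R.
Proof. exact: plus_INR. Qed.
Lemma INR_muln a b : INR (a * b) = (INR a * INR b)%R.
Proof. exact: mult_INR. Qed.
Lemma INR_leq a b : a <= b -> (INR a <= INR b)%R.
Proof. by move/leP; apply: le_INR. Qed.
Lemma INR_ltn a b : a < b -> (INR a < INR b)%R.
Proof. by move/ltP; apply: lt_INR. Qed.
Lemma INR_subn a b : b <= a -> INR (a - b) = (INR a - INR b)%R.
Proof. by move=> /leP H; apply: minus_INR. Qed.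
Lemma INR_expn a n : INR (a ^ n) = (INR a ^ n)%R.
Proof. elim: n => [|n IH] //=; by rewrite expnS INR_muln IH. Qed.



Notation Feat Sg m := ('I_m * {ffun Sg -> bool})%type.
Section Sep.
Variables (T Sg : finType) (m : nat) (cw : T -> m.-tuple Sg).
Definition sep (phi : Feat Sg m) (p : T * T) : bool :=
  phi.2 (tnth (cw p.1) phi.1) != phi.2 (tnth (cw p.2) phi.1).
Definition ham (p : T * T) : nat := \sum_(i < m) (tnth (cw p.1) i != tnth (cw p.2) i).

Lemma half_f (x y : Sg) : x != y ->
  #|{ffun Sg -> bool}| <= 2 * #|[set f : {ffun Sg -> bool} | f x != f y]|.
Proof.
move=> xy.
pose flip (f : {ffun Sg -> bool}) := [ffun z => if z == x then ~~ f z else f z].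
have flipK : involutive flip.
  by move=> f; apply/ffunP => z; rewrite !ffunE; case: eqP => //; rewrite negbK.
have sub : flip @: [set f : {ffun Sg -> bool} | f x == f y] \subset
           [set f : {ffun Sg -> bool} | f x != f y].
  apply/subsetP => g /imsetP [f]; rewrite inE => /eqP E ->.
  have yx : (y == x) = false by rewrite eq_sym (negbTE xy).
  by rewrite inE !ffunE eqxx yx E; case: (f y).
have := subset_leq_card sub; rewrite card_imset; last exact: inv_inj.
move=> H.
rewrite -cardsT -(cardsID [set f : {ffun Sg -> bool} | f x == f y] setT) mul2n -addnn.
rewrite leq_add //.
  by rewrite setTI.
rewrite setTD; apply: subset_leq_card; apply/subsetP => f; rewrite !inE //.
Qed.

Lemma sep_count p : ham p * #|{ffun Sg -> bool}| <= 2 * #|[set phi : Feat Sg m | sep phi p]|.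
Proof.
rewrite -sum_indicator -(pair_bigA _ (fun i f => (sep (i, f) p : nat))) /=.
rewrite /ham big_distrl big_distrr /=; apply: leq_sum => i _.
have -> : \sum_(f : {ffun Sg -> bool}) (sep (i, f) p : nat) =
          #|[set f : {ffun Sg -> bool} | f (tnth (cw p.1) i) != f (tnth (cw p.2) i)]|.
  by rewrite -sum_indicator.
case: eqP => [_|/eqP ne] /=; first by rewrite mul0n.
by rewrite mul1n; apply: half_f.
Qed.
End Sep.

Section Avg.
Variables (T Sg : finType) (m : nat) (cw : T -> m.-tuple Sg).

Lemma avg (i0 : 'I_m) (U : {set T * T}) :
  exists phi : Feat Sg m, \sum_(p in U) ham cw p <= 2 * m * #|[set p in U | sep cw phi p]|.
Proof.
pose g (phi : Feat Sg m) := #|[set p in U | sep cw phi p]|.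
have Fpos : 0 < #|{: Feat Sg m}|.
  by apply/card_gt0P; exists (i0, [ffun=> false]).
have [phi Hphi] := eq_bigmax g Fpos.
exists phi.
have Npos : 0 < #|{ffun Sg -> bool}| by apply/card_gt0P; exists [ffun=> false].
rewrite -(leq_pmul2l Npos).
have E1 : \sum_(phi : Feat Sg m) g phi = \sum_(p in U) #|[set phi : Feat Sg m | sep cw phi p]|.
  have Eg : forall psi, g psi = \sum_(p : T * T) ((p \in U) && sep cw psi p : nat).
    by move=> psi; rewrite /g -sum_indicator.
  rewrite (eq_bigr _ (fun psi _ => Eg psi)) exchange_big /= [RHS]big_mkcond /=.
  apply: eq_bigr => p _; rewrite -sum_indicator.
  case: (p \in U) => //=; by rewrite big1.
have E2 : \sum_(phi : Feat Sg m) g phi <= #|{: Feat Sg m}| * g phi.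
  rewrite -Hphi -sum_nat_const; apply: leq_sum => psi _; exact: leq_bigmax.
have cF : #|{: Feat Sg m}| = m * #|{ffun Sg -> bool}| by rewrite card_prod card_ord.
rewrite mulnC big_distrl /=.
apply: (@leq_trans (\sum_(p in U) 2 * #|[set psi : Feat Sg m | sep cw psi p]|)).
  by apply: leq_sum => p _; apply: sep_count.
rewrite -big_distrr /= -E1.
apply: leq_trans (leq_mul (leqnn 2) E2) _.
rewrite cF /g; apply: eq_leq; rewrite [m * _]mulnC -!mulnA; exact: mulnCA.
Qed.
End Avg.

Section Iter.
Variables (T Sg : finType) (m : nat) (cw : T -> m.-tuple Sg).

Lemma ham_le p : ham cw p <= m.
Proof.
rewrite /ham -[X in _ <= X]card_ord -sum1_card; apply: leq_sum => i _; exact: leq_b1.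
Qed.

Lemma iter_sep (i0 : 'I_m) h : forall n (U : {set T * T}),
  (forall p, p \in U -> h <= ham cw p) ->
  exists l : seq (Feat Sg m), size l = n /\
    (INR #|[set p in U | all (fun phi => ~~ sep cw phi p) l]| <=
     (1 - INR h / (2 * INR m)) ^ n * INR #|U|)%R.
Proof.
have m0 : (0 < INR m)%R by exact: (@INR_ltn 0 m (leq_ltn_trans (leq0n _) (ltn_ord i0))).
elim=> [|n IH] U HU.
  exists [::]; split => //=; rewrite Rmult_1_l; apply: INR_leq; apply: subset_leq_card.
  by apply/subsetP => p; rewrite inE => /andP [].
case: (set_0Vmem U) => [->|[p0 p0U]].
  exists (nseq n.+1 (i0, [ffun=> false])); split; first by rewrite size_nseq.
  have -> : [set p in set0 | all (fun phi => ~~ sep cw phi p) (nseq n.+1 (i0, [ffun=> false]))] = set0.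
    by apply/setP => p; rewrite !inE.
  rewrite cards0 /=; lra.
have hm : h <= m by apply: leq_trans (HU _ p0U) (ham_le p0).
have [phi Hphi] := avg cw i0 U.
pose U' := [set p in U | ~~ sep cw phi p].
have HU' : forall p, p \in U' -> h <= ham cw p.
  by move=> p; rewrite inE => /andP [pU _]; apply: HU.
have [l [sl Hl]] := IH U' HU'.
exists (phi :: l); split; first by rewrite /= sl.
have -> : [set p in U | all (fun phi0 => ~~ sep cw phi0 p) (phi :: l)] =
          [set p in U' | all (fun phi0 => ~~ sep cw phi0 p) l].
  by apply/setP => p; rewrite !inE /= andbA.
apply: (Rle_trans _ _ _ Hl).
have cU : #|U'| + #|[set p in U | sep cw phi p]| = #|U|.
  rewrite addnC -(cardsID [set p | sep cw phi p] U); congr (_ + _); apply: eq_card => p;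
  by rewrite !inE andbC.
have hU : #|U| * h <= 2 * m * #|[set p in U | sep cw phi p]|.
  apply: leq_trans Hphi; rewrite -sum_nat_const; apply: leq_sum => p pU; exact: HU.
move: (INR_leq hU); rewrite !INR_muln -cU INR_addn.
have hR : (INR h <= INR m)%R by apply: INR_leq.
have r0 : (0 <= 1 - INR h / (2 * INR m))%R.
  have : (INR h / (2 * INR m) <= 1)%R.
    apply: (Rmult_le_reg_r (2 * INR m)); first lra.
    rewrite /Rdiv Rmult_assoc Rinv_l; lra.
  lra.
have rn : (0 <= (1 - INR h / (2 * INR m)) ^ n)%R by apply: pow_le.
move: (pos_INR #|U'|) (pos_INR #|[set p in U | sep cw phi p]|) (pos_INR h).
set a := INR #|U'|; set b := INR #|[set p in U | sep cw phi p]|; set c := INR h.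
move=> a0 b0 c0 H.
rewrite /= (Rmult_comm (1 - c / (2 * INR m))) Rmult_assoc.
apply: Rmult_le_compat_l => //.
have e : ((1 - c / (2 * INR m)) * (a + b) = a + b - c * (a + b) / (2 * INR m))%R by field; lra.
rewrite e.
have : (c * (a + b) / (2 * INR m) <= b)%R.
  apply: (Rmult_le_reg_r (2 * INR m)); first lra.
  rewrite /Rdiv Rmult_assoc Rinv_l; last lra.
  rewrite Rmult_1_r; move: H; rewrite Rmult_comm => H.
  have E2 : INR 2 = 2%R by rewrite /=; lra.
  rewrite E2 in H; lra.
lra.
Qed.
End Iter.

Lemma ln_le' x y : (0 < x)%R -> (x <= y)%R -> (ln x <= ln y)%R.
Proof.
move=> x0 [xy|<-]; last lra.
by apply: Rlt_le; apply: ln_increasing.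
Qed.

Lemma ln_sub1 x : (0 < x)%R -> (ln x <= x - 1)%R.
Proof. move=> x0; have := exp_ineq1_le (ln x); rewrite exp_ln //; lra. Qed.

Lemma exp_pow y n : (exp y ^ n = exp (INR n * y))%R.
Proof.
elim: n => [|n IH]; first by rewrite /= Rmult_0_l exp_0.
rewrite [LHS]/= IH -exp_plus S_INR; congr exp; ring.
Qed.

Lemma exp1_gt2 : (2 < exp 1)%R.
Proof. have := exp_ineq1 1 ltac:(lra); lra. Qed.

Lemma ln2_gt : (/2 < ln 2)%R.
Proof.
have e : (exp (/2) * exp (/2) = exp 1)%R by rewrite -exp_plus; congr exp; field.
have h : (exp (/2) < 2)%R.
  have := exp_le_3; have := exp_pos (/2); nra.
rewrite -{1}(ln_exp (/2)); apply: ln_increasing => //; exact: exp_pos.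
Qed.

Lemma ln500_lt : (ln 500 < 9)%R.
Proof.
have h : (500 < exp 9)%R.
  have -> : (9 = INR 9 * 1)%R by rewrite /=; ring.
  rewrite -exp_pow; have := exp1_gt2 => h2.
  have : (2 ^ 9 <= exp 1 ^ 9)%R by apply: pow_incr; lra.
  rewrite /=; lra.
rewrite -(ln_exp 9); apply: ln_increasing => //; lra.
Qed.

Lemma final_real (K Dd Mr delta : R) :
  (0 < delta < /2)%R -> (1 <= K)%R -> (0 < Dd)%R -> (Dd <= Mr)%R ->
  (Mr <= 4 * K / delta + 1)%R ->
  (K * ln 2 <= Dd + Dd * ln Mr - Dd * ln Dd)%R ->
  (/100 * K / ln (/ delta) <= Dd)%R.
Proof.
move=> [d0 d1] K1 D0 DM MK H.
set L := ln (/ delta).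
have L2 : (ln 2 < L)%R by apply: ln_increasing; [lra | apply: (Rmult_lt_reg_l delta); [lra| rewrite Rinv_r; lra]].
have l2 := ln2_gt.
have L0 : (0 < L)%R by lra.
set Dc := (/100 * K / L)%R.
have Dc0 : (0 < Dc)%R by rewrite /Dc; apply: Rdiv_lt_0_compat; lra.
have DcL : (Dc * L = /100 * K)%R by rewrite /Dc; field; lra.
case: (Rle_lt_dec Dc Dd) => // lt.
exfalso.
have F2 : (Dd * ln Dc - Dd * ln Dd <= Dc - Dd)%R.
  have := @ln_sub1 (Dc / Dd)%R ltac:(apply: Rdiv_lt_0_compat; lra).
  rewrite /Rdiv ln_mult ?ln_Rinv; try (apply: Rinv_0_lt_compat); try lra.
  move=> h; have := Rmult_le_compat_l Dd _ _ (Rlt_le _ _ D0) h.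
  have -> : (Dd * (Dc * / Dd - 1) = Dc - Dd)%R by field; lra.
  lra.
have Mr0 : (0 < Mr)%R by lra.
have M5 : (Mr <= 500 * L * Dc * / delta)%R.
  have -> : (500 * L * Dc * / delta = 5 * K / delta)%R.
    rewrite (Rmult_assoc 500) (Rmult_comm L) DcL; field; lra.
  have : (1 <= K / delta)%R.
    apply: (Rmult_le_reg_r delta) => //; rewrite /Rdiv Rmult_assoc Rinv_l; lra.
  move: MK; rewrite /Rdiv; lra.
have F3 : (ln Mr <= ln 500 + ln L + ln Dc + L)%R.
  apply: (Rle_trans _ _ _ (ln_le' Mr0 M5)).
  have i0 : (0 < / delta)%R by apply: Rinv_0_lt_compat.
  have a1 : (0 < 500 * L)%R by lra.
  have a2 : (0 < 500 * L * Dc)%R by apply: Rmult_lt_0_compat.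
  rewrite ln_mult // ln_mult // ln_mult //; try lra.
  rewrite -/L; lra.
have F4 : (ln L <= L - 1)%R by apply: ln_sub1.
have l500 := ln500_lt.
have G : (K * ln 2 <= Dc + Dd * (ln Mr - ln Dc))%R by nra.
have K0 : (0 < K)%R by lra.
case: (Rle_lt_dec (ln Mr - ln Dc) 0) => s.
  have : (Dd * (ln Mr - ln Dc) <= 0)%R by nra.
  have : (Dc * ln 2 < K * ln 2 / 2)%R.
    apply: (Rmult_lt_reg_r L) => //.
    have -> : (Dc * ln 2 * L = /100 * K * ln 2)%R by rewrite -DcL; ring.
    have -> : (K * ln 2 / 2 * L = K * ln 2 * L / 2)%R by field.
    nra.
  nra.
have G2 : (K * ln 2 <= Dc * (9 + 2 * L))%R.
  have : (Dd * (ln Mr - ln Dc) <= Dc * (ln Mr - ln Dc))%R by nra.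
  nra.
have : (Dc * (9 + 2 * L) < K * ln 2)%R.
  apply: (Rmult_lt_reg_r L) => //.
  have -> : (Dc * (9 + 2 * L) * L = /100 * K * (9 + 2 * L))%R by rewrite -DcL; ring.
  nra.
lra.
Qed.

Lemma final_nat (k M d : nat) (delta : R) :
  (0 < delta < /2)%R -> 0 < k -> (INR M <= 4 * INR k / delta + 1)%R -> d <= M ->
  2 ^ k <= \sum_(j < d.+1) 'C(M, j) ->
  (/100 * INR k / ln (/ delta) <= INR d)%R.
Proof.
move=> dl k0 MK dM Hs.
case: d dM Hs => [|d] dM Hs.
  move: Hs; rewrite big_ord_recl big_ord0 bin0 addn0.
  by rewrite -{2}(expn0 2) leq_exp2l // leqn0 => /eqP k00; rewrite k00 in k0.
have H := leq_trans (leq_mul Hs (leqnn _)) (binom_bound dM).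
move: (INR_leq H); rewrite !INR_muln !INR_expn INR_addn.
set D := INR d.+1; set Mr := INR M.
have D0 : (0 < D)%R by apply: lt_0_INR; apply/ltP.
have DM : (D <= Mr)%R by apply: INR_leq.
have Mr0 : (0 < Mr)%R by lra.
move=> HR.
have p1 : (0 < INR 2 ^ k)%R by apply: pow_lt; rewrite /=; lra.
have p2 : (0 < D ^ d.+1)%R by apply: pow_lt.
have p3 : (0 < Mr ^ (M - d.+1))%R by apply: pow_lt.
have := ln_le' (Rmult_lt_0_compat _ _ p1 (Rmult_lt_0_compat _ _ p2 p3)) HR.
rewrite ln_mult //; last by apply: Rmult_lt_0_compat.
rewrite ln_mult // !ln_pow //; try lra.
2: by rewrite /=; lra.
rewrite (INR_subn dM) -/D -/Mr.
have e : (Mr + D = Mr * (1 + D / Mr))%R by field; lra.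
have q0 : (0 <= D / Mr)%R by apply: Rlt_le; apply: Rdiv_lt_0_compat; lra.
rewrite e ln_mult //; try lra.
have l1 : (ln (1 + D / Mr) <= D / Mr)%R.
  have := @ln_sub1 (1 + D / Mr)%R ltac:(lra); lra.
have e2 : (Mr * (D / Mr) = D)%R by field; lra.
have E2 : INR 2 = 2%R by rewrite /=; lra.
rewrite E2 => HH.
have K1 : (1 <= INR k)%R by apply: (@INR_leq 1).
apply: (final_real (Mr := Mr)) => //.
nra.
Qed.

Lemma sep_small (k M : nat) (delta r : R) :
  (0 < delta)%R -> (0 <= r <= 1 - delta / 2)%R -> (4 * INR k / delta <= INR M)%R -> 0 < k ->
  (r ^ M * INR (4 ^ k) < 1)%R.
Proof.
move=> d0 [r0 r1] MK k0.
have h1 : (r ^ M <= exp (- (delta / 2)) ^ M)%R.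
  apply: pow_incr; split => //; have := exp_ineq1_le (- (delta / 2)); lra.
rewrite exp_pow in h1.
have h2 : (exp (INR M * - (delta / 2)) <= exp (INR k * -2))%R.
  have : (INR k * -2 >= INR M * - (delta / 2))%R.
    have : (4 * INR k <= INR M * delta)%R.
      move: MK; rewrite /Rdiv => MK.
      have := Rmult_le_compat_r delta _ _ (Rlt_le _ _ d0) MK.
      by rewrite Rmult_assoc Rinv_l ?Rmult_1_r; lra.
    lra.
  case=> h; [apply: Rlt_le; apply: exp_increasing; lra | rewrite h; lra].
have e5 : (exp (-2) ^ k = exp (INR k * -2))%R by exact: exp_pow.
rewrite -e5 in h2.
rewrite INR_expn.
have e4 : (INR 4 = 4)%R by rewrite /=; lra.
rewrite e4.
have x1 : (0 <= 4 * exp (-2) < 1)%R.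
  have := exp_pos (-2); have := exp1_gt2 => h.
  have e : (exp (-2) * (exp 1 * exp 1) = 1)%R.
    rewrite -!exp_plus; have -> : (-2 + (1 + 1) = 0)%R by ring.
    exact: exp_0.
  split; first lra.
  nra.
have := pow_lt_1_compat (4 * exp (-2)) k x1 (elimT ltP k0).
rewrite Rpow_mult_distr.
have := pow_le _ k (Rlt_le _ _ (exp_pos (-2))).
have : (0 <= 4 ^ k)%R by apply: pow_le; lra.
have := pow_le _ M r0.
nra.
Qed.

Lemma nat_between (r : R) : (0 <= r)%R -> exists n : nat, (r <= INR n <= r + 1)%R.
Proof.
move=> r0; have [h1 h2] := archimed r.
have z0 : (0 <= up r)%Z.
  apply: le_IZR; lra.
exists (Z.to_nat (up r)); rewrite INR_IZR_INZ Z2Nat.id //; lra.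
Qed.

Lemma far (Sg : finType) (k m : nat) (C : k.-tuple bool -> m.-tuple Sg) (q : nat) (delta eps : R) :
  (0 < delta)%R -> (0 < eps)%R -> injective C -> insdel_LCC C q delta eps ->
  forall x x', x != x' -> (delta * INR m < INR (ham C (x, x')))%R.
Proof.
move=> d0 e0 Cinj [Dec [HD HC]] x x' ne.
case: (Rle_lt_dec (INR (ham C (x, x'))) (delta * INR m)) => // H; exfalso.
have ED1 : ED_le (val (C x)) (val (C x')) (2 * delta * INR m)%R.
  exists (2 * hs (val (C x)) (val (C x'))); split.
    rewrite INR_muln -(ham_hs (C x) (C x')); rewrite /ham /= in H.
    have -> : INR 2 = 2%R by rewrite /=; lra.
    rewrite Rmult_assoc; apply: Rmult_le_compat_l; [lra | exact: H].
  by apply: hs_ed; rewrite !size_tuple.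
have ED2 : ED_le (val (C x')) (val (C x')) (2 * delta * INR m)%R.
  exists 0; split; last exact: edw_refl.
  have := pos_INR m; rewrite /=; nra.
case: (boolP [exists i, tnth (C x) i != tnth (C x') i]) => [/existsP [i Hi]|].
  have P1 := HC x i _ ED1; have P2 := HC x' i _ ED2.
  have [[Hnn Hs] _] := HD (size (val (C x'))) i.
  have := prob_sum2 (val (C x')) Hnn Hi; rewrite Hs; lra.
rewrite negb_exists => /forallP Hall.
have : C x = C x'.
  by apply: eq_from_tnth => i; have := Hall i; rewrite negbK => /eqP.
by move/Cinj => E; move: ne; rewrite E eqxx.
Qed.

Theorem mainTheorem7 :
  exists c : R, (0 < c)%R /\
  forall (Sg : finType) (q k m : nat) (C : k.-tuple bool -> m.-tuple Sg)
         (delta eps : R),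
    (0 < delta < /2)%R -> (0 < eps <= /2)%R ->
    injective C ->
    insdel_LCC C q delta eps ->
    exists (k' : nat) (C' : k'.-tuple bool -> m.-tuple Sg),
      insdel_LDC C' q delta eps /\
      (c * INR k / ln (/ delta) <= INR k')%R.
Proof.
exists (/100)%R; split; first lra.
move=> Sg q k m C delta eps [d0 d1] [e0 e1] Cinj LCC.
have L0 : (0 < ln (/ delta))%R.
  rewrite -ln_1; apply: ln_increasing; first lra.
  apply: (Rmult_lt_reg_l delta) => //; rewrite Rinv_r; lra.
pose x0 : k.-tuple bool := [tuple of nseq k false].
case: (posnP k) => [k0|kpos].
  exists 0, (fun _ => C x0); split; last first.
    rewrite k0 /= Rmult_0_r /Rdiv Rmult_0_l; lra.
  exists (fun _ _ => [:: (1%R, Leaf Sg false)]); split.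
    move=> _ _; split; last by move=> p [<-|[]] y.
    split; first by move=> p [<-|[]] /=; lra.
    rewrite /sumR /=; lra.
  by move=> x [i Hi]; exfalso; rewrite ltn0 in Hi.
pose x1 : k.-tuple bool := [tuple of nseq k true].
have x01 : x0 != x1.
  apply/eqP => /(congr1 (fun t => tnth t (Ordinal kpos))).
  by rewrite !tnth_nseq.
have mpos : 0 < m.
  case: (posnP m) => // m0; exfalso.
  have : C x0 = C x1.
    by apply: eq_from_tnth => i; exfalso; have := ltn_ord i; rewrite {2}m0.
  by move/Cinj => E; move: x01; rewrite E eqxx.
pose i0 := Ordinal mpos.
pose K := k.-tuple bool.
have farC := far d0 e0 Cinj LCC.
pose P := fun p : K * K => p.1 != p.2.
have P0 : P (x0, x1) by [].
case: (@arg_minnP _ (x0, x1) P (ham C) P0) => pmin Pmin minp.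
set h := ham C pmin.
have hfar : (delta * INR m < INR h)%R by rewrite /h; move: Pmin; case: (pmin) => a b /= ab; apply: farC.
have hm : h <= m by apply: ham_le.
pose r := (1 - INR h / (2 * INR m))%R.
have m0R : (0 < INR m)%R by apply: lt_0_INR; apply/ltP.
have key : forall a b : R, (0 < b)%R -> (a / b * b = a)%R by move=> a b b0; field; lra.
have r01 : (0 <= r <= 1 - delta / 2)%R.
  have hR : (INR h <= INR m)%R by apply: INR_leq.
  rewrite /r; split.
    have : (INR h / (2 * INR m) <= 1)%R.
      apply: (Rmult_le_reg_r (2 * INR m)); first lra.
      rewrite key; lra.
    lra.
  have : (delta / 2 <= INR h / (2 * INR m))%R.
    apply: (Rmult_le_reg_r (2 * INR m)); first lra.
    rewrite key; last lra.
    have -> : (delta / 2 * (2 * INR m) = delta * INR m)%R by field.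
    lra.
  lra.
have [M [M1 M2]] := nat_between (Rlt_le _ _ (Rdiv_lt_0_compat (4 * INR k) delta ltac:(have := lt_0_INR k (elimT ltP kpos); lra) d0)).
pose U0 := [set p : K * K | P p].
have HU0 : forall p, p \in U0 -> h <= ham C p by move=> p; rewrite inE; apply: minp.
have [l [sl Hl]] := @iter_sep _ _ _ C i0 h M U0 HU0.
have cU0 : #|U0| <= 4 ^ k.
  apply: leq_trans (max_card _) _.
  by rewrite card_prod card_tuple card_bool -expnMn.
have bad0 : forall p, p \in U0 -> ~~ all (fun phi => ~~ sep C phi p) l.
  have Hs := sep_small d0 r01 M1 kpos.
  have rM : (0 <= r ^ M)%R by apply: pow_le; case: r01.
  have H4 : (r ^ M * INR #|U0| <= r ^ M * INR (4 ^ k))%R.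
    by apply: Rmult_le_compat_l => //; apply: INR_leq.
  have : #|[set p in U0 | all (fun phi => ~~ sep C phi p) l]| = 0.
    apply/eqP; rewrite -leqn0 -ltnS; apply/ltP; apply: INR_lt; rewrite /=; apply: (Rle_lt_trans _ _ _ Hl); rewrite -/r; exact: Rle_lt_trans H4 Hs.
  move/eqP; rewrite cards_eq0 => /eqP E p pU; apply/negP => Hp.
  have : p \in [set p in U0 | all (fun phi => ~~ sep C phi p) l] by rewrite inE pU Hp.
  by rewrite E inE.
pose phi0 : Feat Sg m := (i0, [ffun=> false]).
pose g (j : 'I_M) := nth phi0 l j.
pose emb (x : K) : {ffun 'I_M -> bool} := [ffun j => (g j).2 (tnth (C x) (g j).1)].
have emb_inj : injective emb.
  move=> x x' E; apply/eqP; apply/negPn/negP => ne.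
  have := bad0 (x, x'); rewrite inE => /(_ ne); rewrite -has_predC => /hasP [phi phil].
  rewrite /= negbK => sp.
  have jM : index phi l < M by rewrite -sl index_mem.
  have := congr1 (fun f : {ffun 'I_M -> bool} => f (Ordinal jM)) E.
  rewrite !ffunE /g /= nth_index //.
  by move=> E'; move: sp; rewrite /sep /= E' eqxx.
pose B := [set emb x | x : K].
have cB : #|B| = 2 ^ k by rewrite card_imset // card_tuple card_bool.
have paj := pajor B.
have sh0 : shatters B set0.
  apply/forallP => hh; apply/existsP; exists (emb x0); rewrite imset_f //=.
  by apply/forallP => z; rewrite inE.
case: (@arg_maxnP _ set0 (shatters B) (fun S => #|S|) sh0) => Smax shS maxS.
have cS : #|[set S | shatters B S]| <= \sum_(j < #|Smax|.+1) 'C(M, j).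
  have cs := @card_small _ [set S | shatters B S] #|Smax| (fun S => ltac:(rewrite inE; exact: maxS)).
  by rewrite card_ord in cs.
have dM : #|Smax| <= M by have := max_card Smax; rewrite card_ord.
have bound := final_nat (conj d0 d1) kpos M2 dM (leq_trans (eq_leq (esym cB)) (leq_trans paj cS)).
exists #|Smax|.
pose hb (b : #|Smax|.-tuple bool) : {ffun 'I_M -> bool} :=
  [ffun z => [exists j : 'I_#|Smax|, (enum_val j == z) && tnth b j]].
have hbE : forall b j, hb b (enum_val j) = tnth b j.
  move=> b j; rewrite ffunE; apply/existsP/idP => [[j' /andP [/eqP /enum_val_inj -> ->]] //|bj].
  by exists j; rewrite eqxx.
pose good (b : #|Smax|.-tuple bool) (x : K) := [forall j : 'I_#|Smax|, emb x (enum_val j) == tnth b j].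
have goodP : forall b, exists x, good b x.
  move=> b; have /existsP [e /andP [eB /forallP He]] := forallP shS (hb b).
  case/imsetP: eB => x _ E; subst e; exists x; apply/forallP => j.
  have := He (enum_val j); rewrite enum_valP /= hbE; done.
pose pickx (b : #|Smax|.-tuple bool) := odflt x0 [pick x | good b x].
have pickxP : forall b, good b (pickx b).
  move=> b; rewrite /pickx; case: pickP => [x //|H].
  by have [x Hx] := goodP b; move: (H x); rewrite Hx.
exists (fun b => C (pickx b)); split; last exact: bound.
case: LCC => Dec [HD HC].
exists (fun m' j => dmap (g (enum_val j)).2 (Dec m' (g (enum_val j)).1)); split.
  move=> m' j; have [H1 H2] := HD m' (g (enum_val j)).1; split.
    exact: dmap_dist.
  exact: dmap_reads.
move=> b j y Hy.
have := HC (pickx b) (g (enum_val j)).1 y Hy.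
have [[Hnn _] _] := HD (size y) (g (enum_val j)).1.
move=> H1; apply: (Rle_trans _ _ _ H1).
have := prob_map_ge (g (enum_val j)).2 y (tnth (C (pickx b)) (g (enum_val j)).1) Hnn.
have := forallP (pickxP b) j; rewrite /emb ffunE => /eqP ->.
done.
Qed.
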